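(* Let $(\mathcal X_n)_n$ be a sequence of m2m spaces $\mathcal X_n=(X_n,r_n,\nu_n)$ converging with respect to $d_{2GP}$ to an m2m space $\mathcal X=(X,r,\nu)$. Then there are a complete separable metric space $(Z,r_Z)$ and isometric embeddings $\iota:X\to Z$, $\iota_n:X_n\to Z$ ($n\in\mathbb N$) such that $d_P^{\mathcal M_f(Z)}(\iota_{n**}\nu_n,\iota_{**}\nu)\to0$.
   Context: For a Polish space $X$, $\mathcal M_f(X)$ is the set of finite Borel measures; $M_\nu(A)=\int\mu(A)\,d\nu(\mu)$; for measurable $g$, $g_*\mu=\mu\circ g^{-1}$, $g_{**}\nu=\nu\circ(g_* )^{-1}$. An m2m space is $(X,r,\nu)$, $X\subset\mathbb R^{\mathbb N}$ non-empty, $(X,r)$ complete separable metric, $\nu\in\mathcal M_f(\mathcal M_f(X))$; equivalence via measurable maps isometric on $\operatorname{supp}M_\nu$ with $\lambda=f_{**}\nu$. Prokhorov distance for finite measures on a metric space $(S,\rho)$: $d_P^S(\mu,\eta)=\inf\{\varepsilon>0:\mu(A)\le\eta(A^\varepsilon)+\varepsilon,\eta(A)\le\mu(A^\varepsilon)+\varepsilon\ \forall A\text{ closed}\}$; $d_P^{\mathcal M_f(Z)}$ is the Prokhorov metric on finite measures on $(\mathcal M_f(Z),d_P^Z)$. $d_{2GP}((X,r,\nu),(Y,d,\lambda))=\inf d_P^{\mathcal M_f(Z)}(\iota_{X**}\nu,\iota_{Y**}\lambda)$ over complete separable metric spaces $Z$ and isometric embeddings $\iota_X:X\to Z,\iota_Y:Y\to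 Z$. *)

(* Defs.v *)
From HB Require Import structures.
From mathcomp Require Import all_boot all_order all_algebra.
From mathcomp Require Import all_classical all_reals.
From mathcomp Require Import topology normedtype sequences measure.
Set Implicit Arguments. Unset Strict Implicit. Unset Printing Implicit Defensive.
Import Order.TTheory GRing.Theory Num.Theory.
Import numFieldNormedType.Exports.
Local Open Scope classical_set_scope.
Local Open Scope ring_scope.

Section M2M.
Variable R : realType.

Definition is_metric {T : Type} (d : T -> T -> R) :=
  [/\ forall x y, 0 <= d x y, forall x y, d x y = 0 <-> x = y,
      forall x y, d x y = d y x & forall x y z, d x z <= d x y + d y z].

Definition mopen {T : Type} (d : T -> T -> R) (U : set T) :=
  forall x, U x -> exists2 e : R, 0 < e & forall y, d x y < e -> U y.
Definition mclosed {T : Type} (d : T -> T -> R) (A : set T) := mopen d (~` A).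

Definition borel {T : Type} (d : T -> T -> R) : set (set T) :=
  <<s [set U | mopen d U] >>.

Definition cauchy_seq {T : Type} (d : T -> T -> R) (u : nat -> T) :=
  forall e : R, 0 < e -> exists N, forall m n, (N <= m)%N -> (N <= n)%N -> d (u m) (u n) < e.
Definition mconverges {T : Type} (d : T -> T -> R) (u : nat -> T) (x : T) :=
  forall e : R, 0 < e -> exists N, forall n, (N <= n)%N -> d (u n) x < e.
Definition mcomplete {T : Type} (d : T -> T -> R) :=
  forall u, cauchy_seq d u -> exists x, mconverges d u x.
Definition mseparable {T : Type} (d : T -> T -> R) :=
  exists D : set T, countable D /\
    forall x (e : R), 0 < e -> exists2 y, D y & d x y < e.

Definition csm {T : Type} (d : T -> T -> R) := [/\ is_metric d, mcomplete d & mseparable d].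

Definition isometric {T U : Type} (dT : T -> T -> R) (dU : U -> U -> R) (f : T -> U) :=
  forall x y, dU (f x) (f y) = dT x y.

Definition is_finmeas {T : Type} (d : T -> T -> R) (mu : set T -> R) :=
  [/\ mu set0 = 0,
      forall A, borel d A -> 0 <= mu A &
      forall F : nat -> set T, (forall n, borel d (F n)) -> trivIset setT F ->
        (fun n => \sum_(i < n) mu (F i)) @ \oo --> mu (\bigcup_n F n)].

Definition Mf {T : Type} (d : T -> T -> R) := {mu : set T -> R | is_finmeas d mu}.

Lemma is_finmeas0 {T : Type} (d : T -> T -> R) : is_finmeas d (fun _ => 0).
Proof.
split => //= F _ _.
have -> : (fun n => \sum_(i < n) (0:R)) = (fun _ => 0).
  by apply: funext => n; rewrite big1.
exact: cvg_cst.
Qed.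

Definition zeroMf {T : Type} (d : T -> T -> R) : Mf d := exist _ _ (is_finmeas0 d).

Definition enlarge {T : Type} (d : T -> T -> R) (A : set T) (e : R) : set T :=
  [set x | exists2 a, A a & d x a < e].

Definition dP {T : Type} (d : T -> T -> R) (mu eta : Mf d) : R :=
  inf [set e : R | 0 < e /\ forall A, mclosed d A ->
        sval mu A <= sval eta (enlarge d A e) + e /\
        sval eta A <= sval mu (enlarge d A e) + e].

(** image measure g_{*} mu = mu o g^-1 (it is a finite Borel measure whenever g is
    Borel measurable, e.g. an isometric embedding; the default branch is never
    used in that case) *)
Definition pushMf {T U : Type} (dT : T -> T -> R) (dU : U -> U -> R) (g : T -> U)
  (mu : Mf dT) : Mf dU :=
  match pselect (is_finmeas dU (fun A => sval mu (g @^-1` A))) with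
  | left h => exist _ _ h
  | right _ => zeroMf dU
  end.

Definition push2 {T U : Type} (dT : T -> T -> R) (dU : U -> U -> R) (g : T -> U)
  (nu : Mf (@dP T dT)) : Mf (@dP U dU) :=
  @pushMf _ _ (@dP T dT) (@dP U dU) (@pushMf T U dT dU g) nu.

(** m2m spaces: X a nonempty subset of R^N, r a complete separable metric on X,
    nu a finite measure on M_f(X) (with the Prokhorov metric) *)
Record m2m := M2m {
  m2m_set : set (nat -> R);
  m2m_ne : m2m_set !=set0;
  m2m_r : {x : nat -> R | m2m_set x} -> {x : nat -> R | m2m_set x} -> R;
  m2m_rP : csm m2m_r;
  m2m_nu : Mf (@dP _ m2m_r) }.

Arguments m2m_r : clear implicits.
Arguments m2m_nu : clear implicits.
Arguments m2m_set : clear implicits.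

Definition pts (X : m2m) := {x : nat -> R | m2m_set X x}.

Definition d2GP (X Y : m2m) : R :=
  inf [set e : R | exists (Z : Type) (dZ : Z -> Z -> R)
         (iX : pts X -> Z) (iY : pts Y -> Z),
         [/\ csm dZ, isometric (m2m_r X) dZ iX, isometric (m2m_r Y) dZ iY &
             e = @dP _ (@dP _ dZ) (@push2 _ _ (m2m_r X) dZ iX (m2m_nu X))
                            (@push2 _ _ (m2m_r Y) dZ iY (m2m_nu Y))]].

End M2M.

Arguments dP {R T} d mu eta.
Arguments pushMf {R T U} dT dU g mu.
Arguments push2 {R T U} dT dU g nu.
Arguments zeroMf {R T} d.
Arguments m2m_r {R} m.
Arguments m2m_nu {R} m.
Arguments m2m_set {R} m.

(* Main.v *)
Require Import Defs.
From HB Require Import structures.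
From mathcomp Require Import all_boot all_order all_algebra.
From mathcomp Require Import all_classical all_reals.
From mathcomp Require Import topology normedtype sequences measure.
From mathcomp Require Import lra.
Import Order.TTheory GRing.Theory Num.Theory.
Import numFieldNormedType.Exports.
Local Open Scope classical_set_scope.
Local Open Scope ring_scope.


Section Gen.
Context {R : realType}.

Definition symm {T} (d : T -> T -> R) := forall x y, d x y = d y x.
Definition tri {T} (d : T -> T -> R) := forall x y z, d x z <= d x y + d y z.

Lemma enlarge_open {T} {d : T -> T -> R} : symm d -> tri d ->
  forall A e, mopen d (enlarge d A e).
Proof.
move=> sd td A e x [a Aa xa]; exists (e - d x a); first by rewrite subr_gt0.
move=> y hy; exists a => //; have := td y x a; rewrite (sd y x); lra.
Qed.

Lemma open_borel {T} {d : T -> T -> R} {U} : mopen d U -> borel d U.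
Proof. move=> oU; exact: sub_sigma_algebra. Qed.

Lemma closed_borel {T} {d : T -> T -> R} {A} : mclosed d A -> borel d A.
Proof.
move=> cA; rewrite -[A]setCK -setTD; apply: sigma_algebraCD; exact: open_borel.
Qed.

Lemma borelT {T} (d : T -> T -> R) : borel d setT.
Proof. by apply: open_borel => x _; exists 1. Qed.

Lemma borelD {T} {d : T -> T -> R} {A B} : borel d A -> borel d B -> borel d (B `\` A).
Proof.
move=> bA bB.
have -> : B `\` A = setT `\` \bigcup_i bigcup2 (~` B) A i.
  by rewrite bigcup2E setTD setCU setCK.
apply: sigma_algebraCD; apply: sigma_algebra_bigcup => -[|[|i]] /=.
- rewrite -setTD; exact: sigma_algebraCD.
- exact: bA.
- exact: sigma_algebra0.
Qed.

Lemma fm_mono {T} {d : T -> T -> R} {mu} : is_finmeas d mu ->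
  forall A B, borel d A -> borel d B -> A `<=` B -> mu A <= mu B.
Proof.
case=> m0 mpos madd A B bA bB AB.
have bD := borelD bA bB.
have Fb : forall n, borel d (bigcup2 A (B `\` A) n).
  by case=> [|[|n]] //=; exact: sigma_algebra0.
have tF : trivIset setT (bigcup2 A (B `\` A)).
  move=> i j _ _ [x []].
  case: i => [|[|i]]; case: j => [|[|j]] //=; try by move=> ? [].
  all: try by move=> [].
have := madd _ Fb tF; rewrite bigcup2E setDUK // => hc.
have hc2 : (fun n => \sum_(i < n) mu (bigcup2 A (B `\` A) i)) @ \oo -->
    mu A + mu (B `\` A).
  apply: cvg_near_cst; exists 2%N => // n /= hn.
  case: n hn => [|[|k]] // _.
  rewrite big_ord_recl big_ord_recl big1 /= ?addr0 //.
have e := cvg_unique (@Rhausdorff R) hc hc2.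
have := mpos _ bD; rewrite e; lra.
Qed.

Definition dPs {T} (d : T -> T -> R) (mu eta : Mf d) :=
  [set e : R | 0 < e /\ forall A, mclosed d A ->
        sval mu A <= sval eta (enlarge d A e) + e /\
        sval eta A <= sval mu (enlarge d A e) + e].

Lemma dPE {T} (d : T -> T -> R) mu eta : dP d mu eta = inf (dPs d mu eta).
Proof. by []. Qed.

Lemma mf_pos {T} {d : T -> T -> R} (mu : Mf d) {A} : borel d A -> 0 <= sval mu A.
Proof. by case: (proj2_sig mu) => _ + _; apply. Qed.

Lemma mf_mono {T} {d : T -> T -> R} (mu : Mf d) {A B} :
  borel d A -> borel d B -> A `<=` B -> sval mu A <= sval mu B.
Proof. exact: fm_mono (proj2_sig mu) A B. Qed.

Lemma dPs_ne {T} {d : T -> T -> R} : symm d -> tri d ->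
  forall mu eta : Mf d, dPs d mu eta !=set0.
Proof.
move=> sd td mu eta.
have pm := mf_pos mu (borelT d); have pe := mf_pos eta (borelT d).
exists (1 + sval mu setT + sval eta setT); split; first lra.
move=> A cA; split.
  have := mf_mono mu (closed_borel cA) (borelT d) (subsetT A).
  have := mf_pos eta (open_borel (enlarge_open sd td A (1 + sval mu setT + sval eta setT))).
  lra.
have := mf_mono eta (closed_borel cA) (borelT d) (subsetT A).
have := mf_pos mu (open_borel (enlarge_open sd td A (1 + sval mu setT + sval eta setT))).
lra.
Qed.

Lemma dP_le_mem {T} {d : T -> T -> R} {mu eta e} : dPs d mu eta e -> dP d mu eta <= e.
Proof.
move=> h; rewrite dPE; apply: ge_inf => //.
by exists 0 => y [y0 _]; exact: ltW.
Qed.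

Lemma dP_ge0 {T} (d : T -> T -> R) mu eta : 0 <= dP d mu eta.
Proof.
rewrite dPE; have [[e Se]|nS] := pselect (dPs d mu eta !=set0).
  by apply: lb_le_inf; [exists e|move=> y [y0 _]; exact: ltW].
have -> : dPs d mu eta = set0.
  by apply/seteqP; split => x Sx //; exfalso; apply: nS; exists x.
by rewrite inf0.
Qed.

Lemma dP_sym {T} (d : T -> T -> R) mu eta : dP d mu eta = dP d eta mu.
Proof.
rewrite !dPE; congr inf; apply/seteqP; split => e [e0 h]; split => // A cA;
  by have [h1 h2] := h A cA; split.
Qed.

Lemma inf2 (S1 S2 : set R) c : S1 !=set0 -> S2 !=set0 ->
  (forall a b, S1 a -> S2 b -> c <= a + b) -> c <= inf S1 + inf S2.
Proof.
move=> n1 n2 h.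
have h1 : forall b, S2 b -> c - b <= inf S1.
  move=> b Sb; apply: lb_le_inf => // a Sa; have := h a b Sa Sb; lra.
have : c - inf S1 <= inf S2.
  by apply: lb_le_inf => // b Sb; have := h1 b Sb; lra.
lra.
Qed.

Lemma one_sided {T} {d : T -> T -> R} : symm d -> tri d ->
  forall {mu eta kappa : Mf d} {e1 e2}, 0 < e1 -> 0 < e2 ->
  (forall A, mclosed d A -> sval mu A <= sval eta (enlarge d A e1) + e1) ->
  (forall A, mclosed d A -> sval eta A <= sval kappa (enlarge d A e2) + e2) ->
  forall A, mclosed d A ->
    sval mu A <= sval kappa (enlarge d A (e1 + e2)) + (e1 + e2).
Proof.
move=> sd td mu eta kappa e1 e2 e10 e20 h1 h2 A cA.
pose C := [set x | forall de, 0 < de -> exists2 a, A a & d x a < e1 + de].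
have cC : mclosed d C.
  move=> x nCx.
  have [de de0 hde] : exists2 de, 0 < de & forall a, A a -> e1 + de <= d x a.
    apply: contrapT => hn; apply: nCx => de de0; apply: contrapT => hn2.
    apply: hn; exists de => // a Aa; rewrite leNgt; apply/negP => lt.
    by apply: hn2; exists a.
  exists (de / 2); first by rewrite divr_gt0.
  move=> y hy Cy; have [a Aa ha] := Cy (de / 2) (ltac:(lra)).
  have := hde a Aa; have := td x y a; lra.
have s1 : enlarge d A e1 `<=` C.
  by move=> x [a Aa h] de de0; exists a => //; lra.
have s2 : enlarge d C e2 `<=` enlarge d A (e1 + e2).
  move=> x [c Cc h]; have [a Aa ha] := Cc (e2 - d x c) (ltac:(lra)).
  by exists a => //; have := td x c a; lra.
have m1 := mf_mono eta (open_borel (enlarge_open sd td A e1)) (closed_borel cC) s1.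
have m2 := mf_mono kappa (open_borel (enlarge_open sd td C e2))
  (open_borel (enlarge_open sd td A (e1 + e2))) s2.
have := h1 A cA; have := h2 C cC; lra.
Qed.

Lemma dP_tri {T} {d : T -> T -> R} : symm d -> tri d ->
  forall mu eta kappa : Mf d, dP d mu kappa <= dP d mu eta + dP d eta kappa.
Proof.
move=> sd td mu eta kappa; rewrite !dPE.
apply: inf2; try exact: dPs_ne.
move=> a b [a0 ha] [b0 hb]; apply: dP_le_mem; split; first lra.
move=> A cA; split.
  apply: (one_sided sd td a0 b0) => // B cB; [exact: (ha B cB).1|exact: (hb B cB).1].
rewrite (addrC a b); apply: (one_sided sd td b0 a0) => // B cB;
  [exact: (hb B cB).2|exact: (ha B cB).2].
Qed.

Definition lip {T U} (dT : T -> T -> R) (dU : U -> U -> R) (f : T -> U) :=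
  forall x y, dU (f x) (f y) <= dT x y.
Definition mble {T U} (dT : T -> T -> R) (dU : U -> U -> R) (f : T -> U) :=
  forall A, borel dU A -> borel dT (f @^-1` A).

Lemma lip_open {T U} {dT : T -> T -> R} {dU : U -> U -> R} {f : T -> U} :
  lip dT dU f -> forall A, mopen dU A -> mopen dT (f @^-1` A).
Proof.
move=> lf A oA x Afx; have [e e0 he] := oA _ Afx; exists e => // y hy.
by apply: he; have := lf x y; lra.
Qed.

Lemma lip_closed {T U} {dT : T -> T -> R} {dU : U -> U -> R} {f : T -> U} :
  lip dT dU f -> forall A, mclosed dU A -> mclosed dT (f @^-1` A).
Proof. by move=> lf A cA; exact: (lip_open lf (~` A) cA). Qed.

Lemma lip_mble {T U} {dT : T -> T -> R} {dU : U -> U -> R} {f : T -> U} :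
  lip dT dU f -> mble dT dU f.
Proof.
move=> lf A bA.
have : image_set_system setT f (borel dT) A.
  apply: (@smallest_sub _ (sigma_algebra setT) [set U | mopen dU U]
    (image_set_system setT f (borel dT))
    (sigma_algebra_image f (smallest_sigma_algebra setT [set U | mopen dT U])) _ A bA).
  move=> V oV; rewrite /image_set_system /= setTI; apply: open_borel.
  exact: lip_open lf V oV.
by rewrite /image_set_system /= setTI.
Qed.

Lemma finmeas_push {T U} {dT : T -> T -> R} {dU : U -> U -> R} {f : T -> U} mu :
  mble dT dU f -> is_finmeas dT mu -> is_finmeas dU (fun A => mu (f @^-1` A)).
Proof.
move=> mf [m0 mp ma]; split.
- by rewrite preimage_set0.
- by move=> A bA; apply: mp; apply: mf.
- move=> F bF tF; rewrite preimage_bigcup; apply: ma.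
    by move=> n; apply: mf.
  move=> i j _ _ [x [h1 h2]]; apply: tF => //; by exists (f x).
Qed.

Lemma pushE {T U} {dT : T -> T -> R} {dU : U -> U -> R} {f : T -> U} (mu : Mf dT) :
  mble dT dU f -> sval (pushMf dT dU f mu) = fun A => sval mu (f @^-1` A).
Proof.
move=> mf; rewrite /pushMf; case: pselect => // -[].
exact: finmeas_push mf (proj2_sig mu).
Qed.

Lemma sig_eq {A : Type} {P : A -> Prop} (u v : {x | P x}) : sval u = sval v -> u = v.
Proof.
case: u v => [x p] [y q] /= e; subst y; congr exist; exact: Prop_irrelevance.
Qed.

Lemma push_comp {T U V} {dT : T -> T -> R} {dU : U -> U -> R} {dV : V -> V -> R}
  {f : T -> U} {g : U -> V} (mu : Mf dT) : mble dT dU f -> mble dU dV g ->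
  pushMf dT dV (g \o f) mu = pushMf dU dV g (pushMf dT dU f mu).
Proof.
move=> mf mg; apply: sig_eq.
have mgf : mble dT dV (g \o f) by move=> A bA; exact: (mf _ (mg A bA)).
by rewrite (pushE _ mgf) (pushE _ mg) (pushE _ mf).
Qed.

Lemma push_lip {T U} {dT : T -> T -> R} {dU : U -> U -> R} {f : T -> U} :
  symm dT -> tri dT -> symm dU -> tri dU ->
  lip dT dU f -> lip (dP dT) (dP dU) (pushMf dT dU f).
Proof.
move=> sT tT sU tU lf mu eta; rewrite (dPE dT).
apply: lb_le_inf; first exact: dPs_ne.
move=> e [e0 h]; apply: dP_le_mem; split => // A cA.
have mf := lip_mble lf.
rewrite !(pushE _ mf).
have [h1 h2] := h _ (lip_closed lf A cA).
have sub : enlarge dT (f @^-1` A) e `<=` f @^-1` (enlarge dU A e).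
  by move=> x [a Aa ha]; exists (f a) => //; have := lf x a; lra.
have bl := open_borel (enlarge_open sT tT (f @^-1` A) e).
have br := mf _ (open_borel (enlarge_open sU tU A e)).
have := mf_mono eta bl br sub; have := mf_mono mu bl br sub.
lra.
Qed.

End Gen.
Lemma small_inv (R : realType) (e : R) : 0 < e -> exists N, forall k, (N <= k)%N -> (k.+1%:R)^-1 < e.
Proof.
move=> e0; have [N hN] := ltr_add_invr e0; exists N => k hk.
apply: le_lt_trans hN; rewrite add0r lef_pV2 ?posrE // ler_nat ltnS //.
Qed.

Lemma inf1 (R : realType) (S : set R) a c : S !=set0 ->
  (forall s, S s -> c <= a + s) -> c <= a + inf S.
Proof.
move=> nS h; have : c - a <= inf S.
  by apply: lb_le_inf => // s Ss; have := h s Ss; lra.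
lra.
Qed.

Section Glue.
Variable R : realType.
Variables (Y : Type) (dY : Y -> Y -> R) (y0 : Y).
Hypotheses (mY : is_metric dY) (cY : mcomplete dY).
Variable Zn : nat -> Type.
Variable dn : forall n, Zn n -> Zn n -> R.
Hypothesis hn : forall n, csm (dn n).
Variable jn : forall n, Y -> Zn n.
Hypothesis ij : forall n, isometric dY (dn n) (jn n).

Let dn_ge0 {n} x y : 0 <= dn n x y. Proof. by case: (hn n) => -[]. Qed.
Let dn_sym {n} x y : dn n x y = dn n y x. Proof. by case: (hn n) => -[]. Qed.
Let dn_tri {n} x y z : dn n x z <= dn n x y + dn n y z. Proof. by case: (hn n) => -[]. Qed.
Let dn_refl {n} x : dn n x x = 0. Proof. by case: (hn n) => -[_ h _ _] _ _; apply/h. Qed.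
Let dY_ge0 x y : 0 <= dY x y. Proof. by case: mY. Qed.
Let dY_refl x : dY x x = 0. Proof. by case: mY => _ h _ _; apply/h. Qed.

Definition Sg := {n : nat & Zn n}.

Definition crossf {n m} (z : Zn n) (w : Zn m) := fun y => dn n z (jn n y) + dn m (jn m y) w.
Definition cross {n m} (z : Zn n) (w : Zn m) := inf (range (crossf z w)).

Lemma cross_ne {n m} (z : Zn n) (w : Zn m) : range (crossf z w) !=set0.
Proof. by exists (crossf z w y0); exists y0. Qed.

Lemma cross_lb {n m} (z : Zn n) (w : Zn m) y : cross z w <= crossf z w y.
Proof.
apply: ge_inf; last by exists y.
exists 0 => _ [y' _ <-]; rewrite /crossf; have := dn_ge0 z (jn n y'); have := dn_ge0 (jn m y') w; lra.
Qed.

Lemma cross_ge {n m} (z : Zn n) (w : Zn m) c : (forall y, c <= crossf z w y) -> c <= cross z w.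
Proof. by move=> h; apply: lb_le_inf; [exact: cross_ne|move=> _ [y _ <-]]. Qed.

Lemma cross_appr {n m} (z : Zn n) (w : Zn m) e : 0 < e -> exists y, crossf z w y < cross z w + e.
Proof.
move=> e0; have hi : has_inf (range (crossf z w)).
  split; first exact: (cross_ne z w).
  exists 0 => _ [y' _ <-]; rewrite /crossf; have := dn_ge0 z (jn n y'); have := dn_ge0 (jn m y') w; lra.
by have [_ [y _ <-] hy] := inf_adherent e0 hi; exists y.
Qed.

Definition rho (p q : Sg) : R :=
  match p, q with existT n z, existT m w =>
    match pselect (m = n) with
    | left e => dn n z (eq_rect m Zn w n e)
    | right _ => cross z w
    end end.

Arguments rho : simpl never.

Lemma rho_same {n} (z w : Zn n) : rho (existT _ n z) (existT _ n w) = dn n z w.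
Proof. by rewrite /rho; case: pselect => [e|//]; rewrite (eq_axiomK e). Qed.

Lemma rho_diff {n m} (z : Zn n) (w : Zn m) : m <> n ->
  rho (existT _ n z) (existT _ m w) = cross z w.
Proof. by move=> nm; rewrite /rho; case: pselect. Qed.

Lemma cross_sym {n m} (z : Zn n) (w : Zn m) : cross z w = cross w z.
Proof.
rewrite /cross (_ : crossf z w = crossf w z) //; apply: funext => y.
by rewrite /crossf addrC dn_sym (dn_sym (jn n y)).
Qed.

Lemma cross_ge0 {n m} (z : Zn n) (w : Zn m) : 0 <= cross z w.
Proof.
apply: cross_ge => y; rewrite /crossf.
by have := dn_ge0 z (jn n y); have := dn_ge0 (jn m y) w; lra.
Qed.

Lemma rho_ge0 p q : 0 <= rho p q.
Proof.
case: p q => n z [m w]; have [e|ne] := pselect (m = n).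
  by subst m; rewrite rho_same.
by rewrite rho_diff // cross_ge0.
Qed.

Lemma rho_sym p q : rho p q = rho q p.
Proof.
case: p q => n z [m w]; have [e|ne] := pselect (m = n).
  by subst m; rewrite !rho_same dn_sym.
rewrite (rho_diff z) // (rho_diff w); first exact: cross_sym.
by move=> e; apply: ne.
Qed.

Lemma rho_refl p : rho p p = 0.
Proof. by case: p => n z; rewrite rho_same dn_refl. Qed.

Lemma rho_kb {n k} (z : Zn n) (u : Zn k) y y' :
  rho (existT _ n z) (existT _ k u) <= dn n z (jn n y) + dY y y' + dn k (jn k y') u.
Proof.
have [e|ne] := pselect (k = n).
  subst k; rewrite rho_same -(ij n y y').
  have := dn_tri z (jn n y) u; have := dn_tri (jn n y) (jn n y') u; lra.
rewrite rho_diff //; have := cross_lb z u y; rewrite /crossf -(ij k y y').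
have := dn_tri (jn k y) (jn k y') u; lra.
Qed.

Lemma rho_tri p q r : rho p r <= rho p q + rho q r.
Proof.
case: p q r => n z [m w] [k u].
have [e|ne] := pselect (m = n); have [e'|ne'] := pselect (k = m).
- by subst m k; rewrite !rho_same.
- subst m; rewrite rho_same (rho_diff z u ne') (rho_diff w u ne').
  apply: inf1; first exact: cross_ne.
  move=> _ [y _ <-]; have := rho_kb z u y y; rewrite dY_refl (rho_diff z u ne').
  rewrite /crossf; have := dn_tri z w (jn n y); lra.
- subst k; rewrite (rho_diff z w ne) (rho_diff z u ne) rho_same addrC.
  apply: inf1; first exact: cross_ne.
  move=> _ [y _ <-]; have := rho_kb z u y y; rewrite dY_refl (rho_diff z u ne).
  rewrite /crossf; have := dn_tri (jn m y) w u; lra.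
- rewrite (rho_diff z w ne) (rho_diff w u ne').
  apply: inf2; try exact: cross_ne.
  move=> _ _ [y _ <-] [y' _ <-]; have := rho_kb z u y y'.
  rewrite /crossf -(ij m y y'); have := dn_tri (jn m y) w (jn m y'); lra.
Qed.

Lemma rho_cons {n m} y (w : Zn m) :
  rho (existT _ n (jn n y)) (existT _ m w) = dn m (jn m y) w.
Proof.
have [e|ne] := pselect (m = n); first by subst m; rewrite rho_same.
rewrite rho_diff //; apply/eqP; rewrite eq_le; apply/andP; split.
  by have := cross_lb (jn n y) w y; rewrite /crossf dn_refl add0r.
apply: cross_ge => y'; rewrite /crossf (ij n y y') -(ij m y y').
exact: dn_tri.
Qed.

Lemma rho_emb {n m} y y' :
  rho (existT _ n (jn n y)) (existT _ m (jn m y')) = dY y y'.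
Proof. by rewrite rho_cons ij. Qed.

Lemma rho_complete : mcomplete rho.
Proof.
move=> u cu.
have [[n hA]|hB] := pselect (exists n, forall N, exists k, (N <= k)%N /\ projT1 (u k) = n).
  have hA' : forall N, exists kw : nat * Zn n, (N <= kw.1)%N /\ u kw.1 = existT _ n kw.2.
    move=> N; have [k [Nk e]] := hA N; case E: (u k) e => [m w] /= e; subst m.
    by exists (k, w).
  have [f hf] := choice hA'.
  pose w N := (f N).2; pose kk N := (f N).1.
  have hw N : u (kk N) = existT _ n (w N) := (hf N).2.
  have hk N : (N <= kk N)%N := (hf N).1.
  have cw : cauchy_seq (dn n) w.
    move=> e e0; have [N hN] := cu e e0; exists N => a b ha hb.
    rewrite -rho_same -!hw; apply: hN; [exact: leq_trans ha (hk a)|exact: leq_trans hb (hk b)].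
  case: (hn n) => _ cn _; have [z hz] := cn w cw.
  exists (existT _ n z) => e e0.
  have [N1 h1] := cu (e / 2) (ltac:(lra)); have [N2 h2] := hz (e / 2) (ltac:(lra)).
  exists (maxn N1 N2) => i hi.
  have := rho_tri (u i) (u (kk (maxn N1 N2))) (existT _ n z).
  have := h1 i (kk (maxn N1 N2)) (leq_trans (leq_maxl N1 N2) hi)
    (leq_trans (leq_maxl N1 N2) (hk _)).
  have := h2 (maxn N1 N2) (leq_maxr N1 N2).
  rewrite hw rho_same; lra.
have hl : forall k, exists l, (k <= l)%N /\ projT1 (u l) <> projT1 (u k).
  move=> k; apply: contrapT => hn'; apply: hB; exists (projT1 (u k)) => N.
  exists (maxn N k); split; first exact: leq_maxl.
  apply: contrapT => hne; apply: hn'; exists (maxn N k); split => //; exact: leq_maxr.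
have hy : forall k, exists yl : Y * nat, (k <= yl.2)%N /\
    rho (u k) (existT _ (projT1 (u k)) (jn _ yl.1)) < rho (u k) (u yl.2) + (k.+1%:R)^-1.
  move=> k; have [l [kl hl']] := hl k.
  move: hl'; case E1: (u k) => [n z]; case E2: (u l) => [m w] /= nmn.
  have [y hy] := cross_appr z w (k.+1%:R)^-1 (ltac:(by rewrite invr_gt0 ltr0Sn)).
  exists (y, l); split => //; rewrite E2 rho_same (rho_diff z w nmn).
  move: hy; rewrite /crossf /= => hy; apply: le_lt_trans hy.
  by rewrite lerDl dn_ge0.
have [g hg] := choice hy.
pose yk k := (g k).1; pose v k := existT Zn (projT1 (u k)) (jn _ (yk k)).
have hv k : rho (u k) (v k) < rho (u k) (u (g k).2) + (k.+1%:R)^-1 := (hg k).2.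
have hvd a b : rho (v a) (v b) = dY (yk a) (yk b) by exact: rho_emb.
have hsm : forall e, 0 < e -> exists N, forall k, (N <= k)%N -> rho (u k) (v k) < e.
  move=> e e0; have [N1 h1] := cu (e / 2) (ltac:(lra)); have [N2 h2] := @small_inv R (e / 2) (ltac:(lra)).
  exists (maxn N1 N2) => k hk.
  have := hv k; have := h2 k (leq_trans (leq_maxr N1 N2) hk).
  have := h1 k (g k).2 (leq_trans (leq_maxl N1 N2) hk)
    (leq_trans (leq_trans (leq_maxl N1 N2) hk) (hg k).1).
  move: (k.+1%:R^-1) => t; lra.
have cyk : cauchy_seq dY yk.
  move=> eps e0; have [N1 h1] := hsm (eps / 3) (ltac:(lra)); have [N2 h2] := cu (eps / 3) (ltac:(lra)).
  exists (maxn N1 N2) => a b ha hb; rewrite -hvd.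
  have := rho_tri (v a) (u a) (v b); have := rho_tri (u a) (u b) (v b).
  rewrite (rho_sym (v a) (u a)).
  have := h1 a (leq_trans (leq_maxl N1 N2) ha); have := h1 b (leq_trans (leq_maxl N1 N2) hb).
  have := h2 a b (leq_trans (leq_maxr N1 N2) ha) (leq_trans (leq_maxr N1 N2) hb).
  lra.
have [ys hys] := cY yk cyk.
exists (existT _ 0%N (jn 0%N ys)) => eps e0.
have [N1 h1] := hsm (eps / 2) (ltac:(lra)); have [N2 h2] := hys (eps / 2) (ltac:(lra)).
exists (maxn N1 N2) => k hk.
have := rho_tri (u k) (v k) (existT _ 0%N (jn 0%N ys)); rewrite rho_emb.
have := h1 k (leq_trans (leq_maxl N1 N2) hk); have := h2 k (leq_trans (leq_maxr N1 N2) hk).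
lra.
Qed.

Lemma rho_sep : mseparable rho.
Proof.
have hs n : exists D : set (Zn n), countable D /\
    forall x e, 0 < e -> exists2 y, D y & dn n x y < e by case: (hn n).
pose D n := sval (cid (hs n)).
have hD n : countable (D n) /\ forall x e, 0 < e -> exists2 y, D n y & dn n x y < e :=
  proj2_sig (cid (hs n)).
exists (\bigcup_(n in setT) [set existT Zn n z | z in D n]); split.
  apply: bigcup_countable => [|n _]; first exact: countableP.
  exact: card_le_trans (card_image_le _ _) (hD n).1.
move=> [n z] e e0; have [y Dy hy] := (hD n).2 z e e0.
exists (existT _ n y); first by exists n => //; exists y.
by rewrite rho_same.
Qed.

Definition cls (p : Sg) : set Sg := [set q | rho p q = 0].
Definition Zq := {S : set Sg | exists p, S = cls p}.
Definition qp (p : Sg) : Zq := exist _ (cls p) (ex_intro _ p erefl).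
Definition rep (S : Zq) : Sg := sval (cid (proj2_sig S)).

Lemma sig_eq' {A : Type} {P : A -> Prop} (u v : {x | P x}) : sval u = sval v -> u = v.
Proof.
case: u v => [x p] [y q] /= e; subst y; congr exist; exact: Prop_irrelevance.
Qed.

Lemma repP S : S = qp (rep S).
Proof. by apply: sig_eq'; rewrite /rep /=; case: cid. Qed.

Lemma rho_cong p p' q : rho p p' = 0 -> rho p q = rho p' q.
Proof.
move=> h; apply/eqP; rewrite eq_le; apply/andP; split.
  by have := rho_tri p p' q; rewrite h add0r.
by have := rho_tri p' p q; rewrite (rho_sym p' p) h add0r.
Qed.

Lemma cls_rho p q : cls p = cls q -> rho p q = 0.
Proof. move=> e; have h : cls q q by rewrite /cls /= rho_refl.
by move: h; rewrite -e. Qed.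

Lemma qp_eq p q : rho p q = 0 -> qp p = qp q.
Proof.
move=> h; apply: sig_eq' => /=; apply/seteqP; split => r; rewrite /cls /=.
  by move=> hr; rewrite -(rho_cong _ _ _ h).
by move=> hr; rewrite (rho_cong _ _ _ h).
Qed.

Definition dq (S T : Zq) := rho (rep S) (rep T).

Lemma rep_qp p : rho (rep (qp p)) p = 0.
Proof.
have e : cls p = cls (rep (qp p)) by have := congr1 sval (repP (qp p)).
by rewrite rho_sym; apply: cls_rho.
Qed.

Lemma dq_qp p q : dq (qp p) (qp q) = rho p q.
Proof.
rewrite /dq (rho_cong _ _ _ (rep_qp p)) rho_sym (rho_cong _ _ _ (rep_qp q)).
exact: rho_sym.
Qed.

Lemma dq_qpr S p : dq S (qp p) = rho (rep S) p.
Proof. by rewrite {1}(repP S) dq_qp. Qed.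

Lemma dq_csm : csm dq.
Proof.
split.
- split.
  + by move=> x y; exact: rho_ge0.
  + move=> S T; split; last by move=> ->; exact: rho_refl.
    by move=> h; rewrite (repP S) (repP T); apply: qp_eq.
  + by move=> x y; exact: rho_sym.
  + by move=> x y z; exact: rho_tri.
- move=> u cu; have [p hp] := rho_complete (rep \o u) cu.
  by exists (qp p) => e e0; have [N hN] := hp e e0; exists N => n hnN; rewrite dq_qpr; apply: hN.
- have [D [cD dD]] := rho_sep.
  exists (qp @` D); split; first exact: card_le_trans (card_image_le _ _) cD.
  move=> S e e0; have [q Dq hq] := dD (rep S) e e0.
  by exists (qp q); [exists q|rewrite dq_qpr].
Qed.

Theorem glue_sec :
  exists (Z : Type) (dZ : Z -> Z -> R) (e : forall n, Zn n -> Z),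
    [/\ csm dZ, forall n, isometric (dn n) dZ (e n) &
        forall n y, e n (jn n y) = e 0%N (jn 0%N y)].
Proof.
exists Zq, dq, (fun n z => qp (existT _ n z)).
split.
- exact: dq_csm.
- by move=> n x y; rewrite dq_qp rho_same.
- move=> n y; apply: qp_eq; rewrite rho_emb; exact: dY_refl.
Qed.

End Glue.

Section Main.
Context {R : realType}.

Lemma met_symm {T} {d : T -> T -> R} : is_metric d -> symm d.
Proof. by case. Qed.
Lemma met_tri {T} {d : T -> T -> R} : is_metric d -> tri d.
Proof. by case. Qed.
Lemma iso_lip {T U} {dT : T -> T -> R} {dU : U -> U -> R} {f : T -> U} :
  isometric dT dU f -> lip dT dU f.
Proof. by move=> h x y; rewrite h. Qed.
Lemma iso_comp {T U V} {dT : T -> T -> R} {dU : U -> U -> R} {dV : V -> V -> R}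
  {f : T -> U} {g : U -> V} :
  isometric dT dU f -> isometric dU dV g -> isometric dT dV (g \o f).
Proof. by move=> hf hg x y; rewrite /= hg hf. Qed.

Lemma key {T1 T2 W V} {d1 : T1 -> T1 -> R} {d2 : T2 -> T2 -> R} {dW : W -> W -> R}
  {dV : V -> V -> R} (a : T1 -> W) (b : T2 -> W) (e : W -> V) nu1 nu2 :
  is_metric d1 -> is_metric d2 -> is_metric dW -> is_metric dV ->
  isometric d1 dW a -> isometric d2 dW b -> isometric dW dV e ->
  dP (dP dV) (push2 d1 dV (e \o a) nu1) (push2 d2 dV (e \o b) nu2) <=
  dP (dP dW) (push2 d1 dW a nu1) (push2 d2 dW b nu2).
Proof.
move=> m1 m2 mW mV ia ib ie.
have s1 := met_symm m1; have t1 := met_tri m1.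
have s2 := met_symm m2; have t2 := met_tri m2.
have sW := met_symm mW; have tW := met_tri mW.
have sV := met_symm mV; have tV := met_tri mV.
have la := iso_lip ia; have lb := iso_lip ib; have le := iso_lip ie.
have lPa : lip (dP d1) (dP dW) (pushMf d1 dW a) := push_lip s1 t1 sW tW la.
have lPb : lip (dP d2) (dP dW) (pushMf d2 dW b) := push_lip s2 t2 sW tW lb.
have lPe : lip (dP dW) (dP dV) (pushMf dW dV e) := push_lip sW tW sV tV le.
have ea : pushMf d1 dV (e \o a) = pushMf dW dV e \o pushMf d1 dW a.
  by apply: funext => mu; rewrite /= (push_comp mu (lip_mble la) (lip_mble le)).
have eb : pushMf d2 dV (e \o b) = pushMf dW dV e \o pushMf d2 dW b.
  by apply: funext => mu; rewrite /= (push_comp mu (lip_mble lb) (lip_mble le)).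
rewrite /push2 ea eb (push_comp nu1 (lip_mble lPa) (lip_mble lPe))
  (push_comp nu2 (lip_mble lPb) (lip_mble lPe)).
exact: (push_lip (dP_sym dW) (dP_tri sW tW) (dP_sym dV) (dP_tri sV tV) lPe).
Qed.

Definition d2s (A B : m2m R) := [set e : R | exists (Z : Type) (dZ : Z -> Z -> R)
         (iX : pts A -> Z) (iY : pts B -> Z),
         [/\ csm dZ, isometric (m2m_r A) dZ iX, isometric (m2m_r B) dZ iY &
             e = dP (dP dZ) (push2 (m2m_r A) dZ iX (m2m_nu A))
                            (push2 (m2m_r B) dZ iY (m2m_nu B))]].

Lemma d2E A B : d2GP A B = inf (d2s A B).
Proof. by []. Qed.

Definition pt0 (M : m2m R) : pts M := cid (m2m_ne M).

Lemma unit_metric : is_metric (fun _ _ : unit => (0:R)).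
Proof. split => //; [by move=> [] []|by move=> x y z; rewrite addr0]. Qed.

Lemma unit_complete : mcomplete (fun _ _ : unit => (0:R)).
Proof. by move=> u _; exists tt => e e0; exists 0%N. Qed.

Lemma d2s_ne A B : d2s A B !=set0.
Proof.
pose Zn := fun k : nat => match k with 0 => pts A | _.+1 => pts B end.
pose dn := fun k : nat => match k as k0 return Zn k0 -> Zn k0 -> R with
  0 => m2m_r A | _.+1 => m2m_r B end.
pose jn := fun k : nat => match k as k0 return unit -> Zn k0 with
  0 => fun _ => pt0 A | _.+1 => fun _ => pt0 B end.
have hn : forall k, csm (dn k) by case => [|k]; exact: m2m_rP.
have ij : forall k, isometric (fun _ _ : unit => (0:R)) (dn k) (jn k).
  case => [|k] [] [] /=; [case: (m2m_rP A)|case: (m2m_rP B)] => -[_ h _ _] _ _; exact/h.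
have [Z [dZ [e [hZ hiso _]]]] :=
  @glue_sec R unit (fun _ _ => 0) tt unit_metric unit_complete Zn dn hn jn ij.
exists (dP (dP dZ) (push2 (m2m_r A) dZ (e 0%N) (m2m_nu A))
  (push2 (m2m_r B) dZ (e 1%N) (m2m_nu B))).
by exists Z, dZ, (e 0%N), (e 1%N); split => //; [exact: (hiso 0%N)|exact: (hiso 1%N)].
Qed.

Lemma d2s_lb A B e : d2s A B e -> 0 <= e.
Proof. by move=> [Z [dZ [iX [iY [_ _ _ ->]]]]]; exact: dP_ge0. Qed.

End Main.

Theorem mainTheorem16 (R : realType) (Xs : nat -> m2m R) (X : m2m R) :
  (fun n => d2GP (Xs n) X) @ \oo --> (0 : R) ->
  exists (Z : Type) (dZ : Z -> Z -> R) (i : pts X -> Z)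
         (iN : forall n, pts (Xs n) -> Z),
    [/\ csm dZ, isometric (m2m_r X) dZ i,
        forall n, isometric (m2m_r (Xs n)) dZ (iN n) &
        (fun n => dP (dP dZ) (push2 (m2m_r (Xs n)) dZ (iN n) (m2m_nu (Xs n)))
                             (push2 (m2m_r X) dZ i (m2m_nu X))) @ \oo --> (0 : R)].
Proof.
move=> H.
have hex : forall n, exists2 e, d2s (Xs n) X e & e < d2GP (Xs n) X + (n.+1%:R)^-1.
  move=> n; rewrite d2E; apply: inf_adherent; first by rewrite invr_gt0 ltr0Sn.
  by split; [exact: d2s_ne|exists 0 => e; exact: d2s_lb].
have pk : forall n, {Z : Type & {dZ : Z -> Z -> R & {a : pts (Xs n) -> Z &
    {b : pts X -> Z | [/\ csm dZ, isometric (m2m_r (Xs n)) dZ a,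
       isometric (m2m_r X) dZ b &
       dP (dP dZ) (push2 (m2m_r (Xs n)) dZ a (m2m_nu (Xs n)))
         (push2 (m2m_r X) dZ b (m2m_nu X)) < d2GP (Xs n) X + (n.+1%:R)^-1]}}}}.
  move=> n.
  have h : exists Z (dZ : Z -> Z -> R) (a : pts (Xs n) -> Z) (b : pts X -> Z),
      [/\ csm dZ, isometric (m2m_r (Xs n)) dZ a, isometric (m2m_r X) dZ b &
       dP (dP dZ) (push2 (m2m_r (Xs n)) dZ a (m2m_nu (Xs n)))
         (push2 (m2m_r X) dZ b (m2m_nu X)) < d2GP (Xs n) X + (n.+1%:R)^-1].
    have [e [Z [dZ [a [b [h1 h2 h3 he]]]]] hlt] := hex n.
    by exists Z, dZ, a, b; split => //; rewrite -he.
  have [Z hZ] := cid h; have [dZ hd] := cid hZ; have [a ha] := cid hd; have [b hb] := cid ha.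
  by exists Z, dZ, a; exists b.
pose Zf n := projT1 (pk n).
pose df n : Zf n -> Zf n -> R := projT1 (projT2 (pk n)).
pose af n : pts (Xs n) -> Zf n := projT1 (projT2 (projT2 (pk n))).
pose bf n : pts X -> Zf n := sval (projT2 (projT2 (projT2 (pk n)))).
have hf n : [/\ csm (df n), isometric (m2m_r (Xs n)) (df n) (af n),
       isometric (m2m_r X) (df n) (bf n) &
       dP (dP (df n)) (push2 (m2m_r (Xs n)) (df n) (af n) (m2m_nu (Xs n)))
         (push2 (m2m_r X) (df n) (bf n) (m2m_nu X)) < d2GP (Xs n) X + (n.+1%:R)^-1].
  exact: (proj2_sig (projT2 (projT2 (projT2 (pk n))))).
have hn n : csm (df n) by case: (hf n).
have ha n : isometric (m2m_r (Xs n)) (df n) (af n) by case: (hf n).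
have hb n : isometric (m2m_r X) (df n) (bf n) by case: (hf n).
have hlt n := let: And4 _ _ _ h := hf n in h.
case: (m2m_rP X) => mX cX _.
have [Z [dZ [e [hZ hiso hcomm]]]] :=
  @glue_sec R (pts X) (m2m_r X) (pt0 X) mX cX Zf df hn bf hb.
exists Z, dZ, (e 0%N \o bf 0%N), (fun n => e n \o af n); split.
- exact: hZ.
- exact: iso_comp (hb 0%N) (hiso 0%N).
- by move=> n; exact: iso_comp (ha n) (hiso n).
have ei : forall n, e 0%N \o bf 0%N = e n \o bf n.
  by move=> n; apply: funext => y; rewrite /= hcomm.
apply: (squeeze_cvgr (f := fun _ : nat => (0:R))
  (h := fun n : nat => d2GP (Xs n) X + (n.+1%:R)^-1)).
- apply: nearW => n; rewrite dP_ge0 /= (ei n).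
  apply: le_trans (ltW (hlt n)).
  case: hZ => mZ _ _; case: (hn n) => mn _ _; case: (m2m_rP (Xs n)) => mXn _ _.
  exact: key mXn mX mn mZ (ha n) (hb n) (hiso n).
- exact: cvg_cst.
- rewrite -[0]addr0; apply: cvgD => //; exact: cvg_harmonic.
Qed.
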